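(* Let Assumptions (A1), (A2) and (A3) from the context hold and let $\gamma>0$. Consider the event-triggered estimator $$\dot{\mathbf z}(t)=-\gamma\mathbf z(t)-\mathbf w(t),\qquad \mathbf x(t)=\mathbf z(t)+\boldsymbol\phi(t),\qquad \mathbf z(t_0)=\mathbf z_0,$$ $$\mathbf w(t)=(w_1(t)^T,\dots,w_n(t)^T)^T=(B\otimes I_r)\,\widehat K(t)\,\mathrm{sgn}\{\hat{\boldsymbol\xi}(t)\},\qquad \hat{\boldsymbol\xi}(t)=(B^T\otimes I_r)\hat{\mathbf x}(t).$$ Here $\widehat K(t)$ is diagonal with positive initial diagonal entries $\hat\kappa_j(t_0)$, and it is updated by $\dot{\hat\kappa}_j(t)=|\hat\xi_j(t)|$, where $\hat\xi_j$ is the $j$-th scalar component of $\hat{\boldsymbol\xi}$. The two directed copies of each undirected edge are given the same initial gains. Equivalently, agentwise, $\dot z_i=-\gamma z_i-2\sum_j\mathrm{diag}[\mu_{i,j}]\,\mathrm{sgn}\{\hat x_i-\hat x_j\}$ with $\dot\mu_{i,j}=|\hat x_i-\hat x_j|$ for neighbors, $\mu_{i,j}=\mu_{j,i}$, and $\mu_{i,j}\equiv0$ for non-neighbors. The broadcast state is $\hat x_i(t)=x_i(t^i_{k_i(t)})$ with $t^i_{k_i(t)}=\max\{t^i_k:t^i_k\le t\}$. Let $\boldsymbol\varepsilon(t)=(\varepsilon_1^T,\dots,\varepsilon_n^T)^T=\mathbf x(t)-\hat{\mathbf x}(t)$. Each agent runs the internal dynamics $$\dot\eta_i(t)=-\alpha_i\eta_i(t)-\delta_i\big(\beta_i\mathbf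 1_r^T|\varepsilon_i(t)|-w_i(t)^T\varepsilon_i(t)\big),\qquad \eta_i(t_0)>0,$$ with arbitrary $\alpha_i>0$ and $\delta_i\ge1$. Each agent determines its triggering times by $t^i_1=t_0$ and $$t^i_{k+1}=\min\Big\{t> t^i_k:\ \theta_i\big(\beta_i\mathbf 1_r^T|\varepsilon_i(t)|-w_i(t)^T\varepsilon_i(t)\big)\ge\eta_i(t)\Big\},$$ with $\theta_i\in(0,1)$. Then for every initial condition $\mathbf z_0$ the average consensus error $\tilde{\mathbf x}(t)=\mathbf x(t)-\mathbf 1_n\otimes\bar\phi(t)$ converges to zero as $t\to\infty$.
   Context: There are $n$ agents $v_1,\dots,v_n$ communicating over an undirected graph $\mathcal G(\mathcal V,\mathcal E)$. Each undirected edge is regarded as two distinct directed edges, so the edge set is $\mathcal E=\{e_1,\dots,e_\ell\}$. The incidence matrix $B=[b_{ij}]\in\{-1,0,1\}^{n\times\ell}$ has $b_{ij}=-1$ if edge $e_j$ leaves $v_i$, $b_{ij}=1$ if $e_j$ enters $v_i$, and $0$ otherwise. $I_r$ is the $r\times r$ identity, $\mathbf 1_r$ the all-ones vector, $\otimes$ the Kronecker product, and $(\cdot)^+$ the Moore–Penrose generalized inverse. For vectors, $|\cdot|$ and $\mathrm{sgn}\{\cdot\}$ act componentwise, with $\mathrm{sgn}(0)=0$. $\|\cdot\|_\infty$ applied to a matrix is the induced $\infty$-norm. Each agent $v_i$ has a continuously differentiable reference signal $\phi_i(t)\in\mathbb R^r$; $\boldsymbol\phi(t)=(\phi_1^T,\dots,\phi_n^T)^T$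 and $\bar\phi(t)=\frac1n\sum_i\phi_i(t)$. The estimates are $\mathbf x(t)=(x_1^T,\dots,x_n^T)^T$ and $\hat{\mathbf x}(t)=(\hat x_1^T,\dots,\hat x_n^T)^T$. Between its event times, each $\hat x_i$ is held constant. (A1) The graph $\mathcal G$ is connected and undirected. (A2) There exist constants $\varphi,\dot\varphi<\infty$ such that $\sup_{t\ge0}\|(B^T\otimes I_r)\boldsymbol\phi(t)\|_\infty\le\varphi$ and $\sup_{t\ge0}\|(B^T\otimes I_r)\dot{\boldsymbol\phi}(t)\|_\infty\le\dot\varphi$. (A3) Each agent has a gain $\beta_i\ge(\gamma\varphi+\dot\varphi)\,\|B(B^TB)^+\otimes I_r\|_\infty$. *)

(* Defs.v *)
From Stdlib Require Import Reals Lra Lia Relations.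
Open Scope R_scope.

Fixpoint rsum (N : nat) (f : nat -> R) : R :=
  match N with O => 0 | S m => rsum m f + f m end.

(* Maximum of f 0, ..., f (N-1) (and 0); used only for nonnegative values. *)
Fixpoint rmaxn (N : nat) (f : nat -> R) : R :=
  match N with O => 0 | S m => Rmax (rmaxn m f) (f m) end.

(* Matrices are functions nat -> nat -> R, dimensions carried separately. *)
Definition mtr (A : nat -> nat -> R) : nat -> nat -> R := fun i j => A j i.
Definition mmul (p : nat) (A B : nat -> nat -> R) : nat -> nat -> R :=
  fun i j => rsum p (fun k => A i k * B k j).
Definition mat_eq (m p : nat) (A B : nat -> nat -> R) : Prop :=
  forall i j, (i < m)%nat -> (j < p)%nat -> A i j = B i j.

(* X (p x m) is the Moore-Penrose generalized inverse of A (m x p):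
   the four Penrose equations (real case: transpose). *)
Definition is_pinv (m p : nat) (A X : nat -> nat -> R) : Prop :=
  mat_eq m p (mmul m (mmul p A X) A) A /\
  mat_eq p m (mmul p (mmul m X A) X) X /\
  mat_eq m m (mtr (mmul p A X)) (mmul p A X) /\
  mat_eq p p (mtr (mmul m X A)) (mmul m X A).

(* M (x) I_r with the standard index flattening (a = i*r + k). *)
Definition kronI (r : nat) (M : nat -> nat -> R) : nat -> nat -> R :=
  fun a b => M (a / r)%nat (b / r)%nat *
             (if Nat.eqb (a mod r) (b mod r) then 1 else 0).

Definition infnorm (m p : nat) (M : nat -> nat -> R) : R :=
  rmaxn m (fun a => rsum p (fun b => Rabs (M a b))).

Definition sgn (x : R) : R :=
  if Rlt_dec 0 x then 1 else if Rlt_dec x 0 then -1 else 0.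

Definition Binc (src dst : nat -> nat) (i e : nat) : R :=
  if Nat.eqb (dst e) i then 1 else if Nat.eqb (src e) i then -1 else 0.

(* Graph: l directed edges, each undirected edge appearing as two distinct
   directed edges; no self loops, no duplicate directed edges. *)
Definition undirected_edge_list (n l : nat) (src dst : nat -> nat) : Prop :=
  (forall e, (e < l)%nat -> (src e < n)%nat /\ (dst e < n)%nat /\ src e <> dst e) /\
  (forall e1 e2, (e1 < l)%nat -> (e2 < l)%nat ->
      src e1 = src e2 -> dst e1 = dst e2 -> e1 = e2) /\
  (forall e, (e < l)%nat -> exists e', (e' < l)%nat /\ src e' = dst e /\ dst e' = src e).

Definition adj (l : nat) (src dst : nat -> nat) (i j : nat) : Prop :=
  exists e, (e < l)%nat /\ src e = i /\ dst e = j.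

Definition connected (n l : nat) (src dst : nat -> nat) : Prop :=
  forall i j, (i < n)%nat -> (j < n)%nat -> clos_refl_trans nat (adj l src dst) i j.

Definition rderiv (f : R -> R) (t d : R) : Prop :=
  forall eps, 0 < eps -> exists delta, 0 < delta /\
    forall h, 0 < h < delta -> Rabs ((f (t + h) - f t) / h - d) < eps.

(* hat xi_{e,k}(t) = ((B^T (x) I_r) hat x(t))_{(e,k)}. *)
Definition xi_hat (src dst : nat -> nat) (xhat : nat -> nat -> R -> R)
  (e k : nat) (t : R) : R := xhat (dst e) k t - xhat (src e) k t.

(* w_{i,k}(t) = ((B (x) I_r) hat K(t) sgn{hat xi(t)})_{(i,k)}. *)
Definition w_sig (l : nat) (src dst : nat -> nat) (kappa : nat -> nat -> R -> R)
  (xhat : nat -> nat -> R -> R) (i k : nat) (t : R) : R :=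
  rsum l (fun e => Binc src dst i e * kappa e k t * sgn (xi_hat src dst xhat e k t)).

(* Triggering condition of agent i at time t, relative to its previous
   triggering time s (so eps_i(t) = x_i(t) - x_i(s)). *)
Definition trig_cond (r : nat) (theta beta : R) (x : nat -> R -> R)
  (wi : nat -> R -> R) (etai : R -> R) (s t : R) : Prop :=
  theta * (beta * rsum r (fun k => Rabs (x k t - x k s))
           - rsum r (fun k => wi k t * (x k t - x k s))) >= etai t.

(* Main.v *)
Require Import Defs.
From Stdlib Require Import Reals Relations.
From Stdlib Require Import Lra Lia Classical.
Open Scope R_scope.


Lemma rsum_ext N f g : (forall j, (j < N)%nat -> f j = g j) -> rsum N f = rsum N g.
Proof. induction N; intros H; simpl; [reflexivity|]. rewrite IHN by (intros; apply H; lia). rewrite H by lia. reflexivity. Qed.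

Lemma rsum_plus N f g : rsum N (fun j => f j + g j) = rsum N f + rsum N g.
Proof. induction N; simpl; [lra|]. rewrite IHN; lra. Qed.

Lemma rsum_minus N f g : rsum N (fun j => f j - g j) = rsum N f - rsum N g.
Proof. induction N; simpl; [lra|]. rewrite IHN; lra. Qed.

Lemma rsum_scal N c f : rsum N (fun j => c * f j) = c * rsum N f.
Proof. induction N; simpl; [lra|]. rewrite IHN; lra. Qed.

Lemma rsum_scalr N c f : rsum N (fun j => f j * c) = rsum N f * c.
Proof. induction N; simpl; [lra|]. rewrite IHN; lra. Qed.

Lemma rsum_zero N : rsum N (fun _ => 0) = 0.
Proof. induction N; simpl; [lra|]. rewrite IHN; lra. Qed.

Lemma rsum_const N c : rsum N (fun _ => c) = INR N * c.
Proof. induction N; simpl rsum; [simpl; lra|]. rewrite IHN, S_INR; lra. Qed.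

Lemma rsum_le N f g : (forall j, (j < N)%nat -> f j <= g j) -> rsum N f <= rsum N g.
Proof. induction N; intros H; simpl; [lra|]. pose proof (H N ltac:(lia)). assert (rsum N f <= rsum N g) by (apply IHN; intros; apply H; lia). lra. Qed.

Lemma rsum_nonneg N f : (forall j, (j < N)%nat -> 0 <= f j) -> 0 <= rsum N f.
Proof. intros H. rewrite <- (rsum_zero N). apply rsum_le. auto. Qed.

Lemma rsum_abs N f : Rabs (rsum N f) <= rsum N (fun j => Rabs (f j)).
Proof. induction N; simpl; [rewrite Rabs_R0; lra|]. eapply Rle_trans; [apply Rabs_triang|]. lra. Qed.

Lemma rsum_swap N M (F : nat -> nat -> R) :
  rsum N (fun i => rsum M (fun j => F i j)) = rsum M (fun j => rsum N (fun i => F i j)).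
Proof. induction N; simpl. - rewrite rsum_zero; reflexivity. - rewrite IHN, <- rsum_plus. reflexivity. Qed.

Lemma rsum_term_le N f a : (forall j, (j < N)%nat -> 0 <= f j) -> (a < N)%nat -> f a <= rsum N f.
Proof. induction N; intros H Ha; [lia|]. simpl. assert (0 <= rsum N f) by (apply rsum_nonneg; intros; apply H; lia).
  destruct (Nat.eq_dec a N). - subst; lra. - assert (f a <= rsum N f) by (apply IHN; [intros; apply H|]; lia). pose proof (H N ltac:(lia)); lra. Qed.

Lemma rsum_single N a c : (a < N)%nat -> rsum N (fun j => if Nat.eqb a j then c j else 0) = c a.
Proof. induction N; intros Ha; [lia|]. simpl. destruct (Nat.eq_dec a N).
  - subst. rewrite Nat.eqb_refl. rewrite (rsum_ext N _ (fun _ => 0)). rewrite rsum_zero; lra.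
    intros j Hj. destruct (Nat.eqb_spec N j); [lia|reflexivity].
  - rewrite IHN by lia. destruct (Nat.eqb_spec a N); [lia|lra]. Qed.

Lemma rsum_single' N a c : (a < N)%nat -> rsum N (fun j => if Nat.eqb a j then 1 else 0 * c j) = 1.
Proof. intros. rewrite (rsum_ext _ _ (fun j => if Nat.eqb a j then (fun _ => 1) j else 0)). apply rsum_single; auto.
  intros. destruct (Nat.eqb a j); lra. Qed.

Lemma rsum_add_split a b f : rsum (a + b) f = rsum a f + rsum b (fun j => f (a + j)%nat).
Proof. induction b; simpl. - rewrite Nat.add_0_r; lra. - rewrite Nat.add_succ_r. simpl. rewrite IHb; lra. Qed.

Lemma rsum_mul_split l r F : rsum (l * r) F = rsum l (fun e => rsum r (fun k => F (e * r + k)%nat)).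
Proof. induction l; simpl; [reflexivity|]. rewrite Nat.add_comm, rsum_add_split, IHl. lra. Qed.

Lemma rmaxn_ge N f a : (a < N)%nat -> f a <= rmaxn N f.
Proof. induction N; intros Ha; [lia|]. simpl. destruct (Nat.eq_dec a N).
  - subst. apply Rmax_r. - eapply Rle_trans; [apply IHN; lia| apply Rmax_l]. Qed.

Lemma rmaxn_nonneg N f : 0 <= rmaxn N f.
Proof. induction N; simpl; [lra|]. eapply Rle_trans; [apply IHN|apply Rmax_l]. Qed.

Lemma rsum_sq_zero N g : rsum N (fun j => g j * g j) = 0 -> forall j, (j < N)%nat -> g j = 0.
Proof. intros H j Hj. assert (g j * g j <= rsum N (fun j => g j * g j)).
  { apply (rsum_term_le N (fun j => g j * g j)); auto. intros; nra. }
  nra. Qed.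

Lemma pinv_E n l B P : is_pinv l l (mmul n (mtr B) B) P ->
  forall e j, (e < l)%nat -> (j < n)%nat ->
  rsum l (fun c => mmul l (mmul n (mtr B) B) P e c * B j c) = B j e.
Proof.
  intros [H1 _] e j0 He Hj0.
  set (A := mmul n (mtr B) B).
  assert (HA : forall c d, A c d = rsum n (fun j => B j c * B j d)) by reflexivity.
  assert (Hsym : forall c d, A c d = A d c).
  { intros. rewrite !HA. apply rsum_ext; intros; lra. }
  set (Q := fun c => mmul l A P e c).
  set (X := fun j => rsum l (fun c => Q c * B j c)).
  assert (HP1 : forall d, (d < l)%nat -> rsum l (fun c => Q c * A c d) = A e d).
  { intros d Hd. apply (H1 e d He Hd). }
  assert (HX : forall d, rsum n (fun j => X j * B j d) = rsum l (fun c => Q c * A c d)).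
  { intros d. unfold X. rewrite (rsum_ext n _ (fun j => rsum l (fun c => Q c * B j c * B j d))).
    2:{ intros. rewrite <- rsum_scalr. reflexivity. }
    rewrite rsum_swap. apply rsum_ext. intros c _. rewrite HA, <- rsum_scal. apply rsum_ext; intros; lra. }
  assert (HXX : rsum n (fun j => X j * X j) = A e e).
  { rewrite (rsum_ext n _ (fun j => rsum l (fun d => Q d * (X j * B j d)))).
    2:{ intros j _. unfold X at 2. rewrite <- rsum_scal. apply rsum_ext; intros; lra. }
    rewrite rsum_swap. rewrite (rsum_ext l _ (fun d => Q d * A e d)).
    2:{ intros d Hd. rewrite rsum_scal, HX, HP1; auto. }
    rewrite (rsum_ext l _ (fun d => Q d * A d e)) by (intros; rewrite Hsym; auto). apply HP1; auto. }
  assert (HXB : rsum n (fun j => X j * B j e) = A e e) by (rewrite HX; apply HP1; auto).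
  assert (HBB : rsum n (fun j => B j e * B j e) = A e e) by (rewrite HA; reflexivity).
  assert (Hz : rsum n (fun j => (X j - B j e) * (X j - B j e)) = 0).
  { rewrite (rsum_ext n _ (fun j => X j * X j - 2 * (X j * B j e) + B j e * B j e)) by (intros; ring).
    rewrite rsum_plus, rsum_minus, rsum_scal, HXX, HXB, HBB. ring. }
  pose proof (rsum_sq_zero n _ Hz j0 Hj0). unfold X in H. lra.
Qed.

Lemma Binc_split src dst i e : src e <> dst e ->
  Binc src dst i e = (if Nat.eqb (dst e) i then 1 else 0) - (if Nat.eqb (src e) i then 1 else 0).
Proof. intros H. unfold Binc. destruct (Nat.eqb_spec (dst e) i); destruct (Nat.eqb_spec (src e) i); subst; try lra. congruence. Qed.

Lemma Binc_sum_h n src dst e h : (src e < n)%nat -> (dst e < n)%nat -> src e <> dst e ->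
  rsum n (fun i => Binc src dst i e * h i) = h (dst e) - h (src e).
Proof. intros Hs Hd Hne.
  rewrite (rsum_ext n _ (fun i => (if Nat.eqb (dst e) i then h i else 0) - (if Nat.eqb (src e) i then h i else 0))).
  - rewrite rsum_minus, !rsum_single; auto.
  - intros i _. rewrite Binc_split by auto. destruct (Nat.eqb (dst e) i), (Nat.eqb (src e) i); ring.
Qed.

Lemma proj_lemma n l src dst P :
  undirected_edge_list n l src dst -> connected n l src dst ->
  is_pinv l l (mmul n (mtr (Binc src dst)) (Binc src dst)) P ->
  forall f i, (i < n)%nat ->
  f i - / INR n * rsum n f =
  rsum l (fun e => mmul l (Binc src dst) P i e * (f (dst e) - f (src e))).
Proof.
  intros Hg Hc HP f i0 Hi0.
  destruct Hg as [Hv _].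
  set (B := Binc src dst) in *.
  set (g := fun e => f (dst e) - f (src e)).
  set (M := mmul l B P).
  set (h := fun i => f i - rsum l (fun e => M i e * g e)).
  assert (Hg : forall e, (e < l)%nat -> g e = rsum n (fun j => B j e * f j)).
  { intros e He. destruct (Hv e He) as (?&?&?). unfold B. rewrite Binc_sum_h; auto. }
  assert (HBt : forall e, (e < l)%nat -> rsum n (fun i => B i e * h i) = 0).
  { intros e He. unfold h.
    rewrite (rsum_ext n _ (fun i => B i e * f i - B i e * rsum l (fun e' => M i e' * g e'))) by (intros; ring).
    rewrite rsum_minus, <- Hg by auto.
    assert (E1 : rsum n (fun i => B i e * rsum l (fun e' => M i e' * g e')) =
                 rsum l (fun e' => mmul l (mmul n (mtr B) B) P e e' * g e')).
    { rewrite (rsum_ext n _ (fun i => rsum l (fun e' => B i e * M i e' * g e'))).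
      2:{ intros. rewrite <- rsum_scal. apply rsum_ext; intros; ring. }
      rewrite rsum_swap. apply rsum_ext. intros e' _.
      unfold mmul at 1. rewrite <- rsum_scalr. unfold M, mmul.
      rewrite (rsum_ext n _ (fun i => rsum l (fun c => B i e * B i c * P c e' * g e'))).
      2:{ intros. rewrite <- rsum_scal, <- rsum_scalr. apply rsum_ext; intros; ring. }
      rewrite rsum_swap. apply rsum_ext. intros c _. unfold mtr.
      rewrite <- rsum_scalr, <- rsum_scalr. apply rsum_ext; intros; ring. }
    rewrite E1.
    rewrite (rsum_ext l _ (fun e' => rsum n (fun j => mmul l (mmul n (mtr B) B) P e e' * B j e' * f j))).
    2:{ intros e' He'. rewrite Hg by auto. rewrite <- rsum_scal. apply rsum_ext; intros; ring. }
    rewrite rsum_swap.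
    rewrite (rsum_ext n _ (fun j => B j e * f j)). 1: (rewrite <- Hg by auto; ring).
    intros j Hj. rewrite rsum_scalr. rewrite (pinv_E n l B P HP e j He Hj). reflexivity. }
  assert (Hedge : forall e, (e < l)%nat -> h (dst e) = h (src e)).
  { intros e He. destruct (Hv e He) as (?&?&?). pose proof (HBt e He). unfold B in H2.
    rewrite Binc_sum_h in H2; auto. lra. }
  assert (Hconst : forall i j, clos_refl_trans nat (adj l src dst) i j -> h i = h j).
  { intros i j Hij. induction Hij as [x y [e (He & <- & <-)] | x | x y z _ IH1 _ IH2].
    - symmetry. apply Hedge; auto.
    - reflexivity.
    - congruence. }
  assert (Hn : (0 < n)%nat) by lia.
  assert (Hall : forall i, (i < n)%nat -> h i = h 0%nat) by (intros; apply Hconst, Hc; lia).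
  assert (Hcol : forall e, (e < l)%nat -> rsum n (fun i => M i e) = 0).
  { intros e He. unfold M, mmul. rewrite rsum_swap.
    rewrite (rsum_ext l _ (fun c => 0)). apply rsum_zero.
    intros c Hc'. rewrite rsum_scalr. destruct (Hv c Hc') as (?&?&?).
    rewrite (rsum_ext n _ (fun i => B i c * 1)) by (intros; ring). unfold B. rewrite Binc_sum_h; auto. ring. }
  assert (Hsum : rsum n h = rsum n f).
  { unfold h. rewrite rsum_minus. rewrite rsum_swap.
    rewrite (rsum_ext l _ (fun _ => 0)). rewrite rsum_zero; ring.
    intros e He. rewrite rsum_scalr, Hcol; auto; ring. }
  rewrite (rsum_ext n h (fun _ => h 0%nat)) in Hsum by auto.
  rewrite rsum_const in Hsum.
  assert (INR n > 0) by (apply lt_0_INR; lia).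
  assert (h i0 = / INR n * rsum n f) by (rewrite Hall, <- Hsum by auto; field; lra).
  unfold h, g, M in *; cbv beta in H0. lra.
Qed.

Definition RD := fun h : R => 0 < h.

Lemma rderiv_lim F t d : rderiv F t d <-> limit1_in (fun h => (F (t+h) - F t)/h) RD d 0.
Proof. unfold rderiv, limit1_in, limit_in, RD; simpl; unfold R_dist. split.
  - intros H eps He. destruct (H eps He) as [del [Hd Hh]]. exists del. split; auto.
    intros x [Hx Hx2]. rewrite Rminus_0_r, Rabs_pos_eq in Hx2 by lra. apply Hh; lra.
  - intros H eps He. destruct (H eps He) as [del [Hd Hh]]. exists del. split; auto.
    intros h Hh'. apply Hh. split; [lra|]. rewrite Rminus_0_r, Rabs_pos_eq by lra. lra. Qed.

Lemma limit_ext f g D l x0 : (forall x, D x -> f x = g x) -> limit1_in f D l x0 -> limit1_in g D l x0.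
Proof. unfold limit1_in, limit_in. intros E H eps He. destruct (H eps He) as [a [Ha Hx]]. exists a; split; auto.
  intros x [Dx Hd]. rewrite <- E by auto. apply Hx; auto. Qed.

Lemma limit_id D : limit1_in (fun h => h) D 0 0.
Proof. unfold limit1_in, limit_in. intros eps He. exists eps; split; auto. intros x [_ H]. exact H. Qed.

Lemma rderiv_ext F G t d d' : (forall u, F u = G u) -> d = d' -> rderiv F t d -> rderiv G t d'.
Proof. intros E <- H eps He. destruct (H eps He) as [del [Hd Hh]]. exists del; split; auto. intros; rewrite <- !E; auto. Qed.

Lemma rderiv_const c t : rderiv (fun _ => c) t 0.
Proof. intros eps He. exists 1. split; [lra|]. intros h Hh. replace ((c - c)/h - 0) with 0 by (field; lra). rewrite Rabs_R0; lra. Qed.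

Lemma rderiv_lin c t : rderiv (fun u => c * u) t c.
Proof. intros eps He. exists 1. split; [lra|]. intros h Hh. replace ((c * (t + h) - c * t)/h - c) with 0 by (field; lra). rewrite Rabs_R0; lra. Qed.

Lemma rderiv_plus F G t a b : rderiv F t a -> rderiv G t b -> rderiv (fun u => F u + G u) t (a + b).
Proof. rewrite !rderiv_lim. intros H1 H2. eapply limit_ext; [|apply (limit_plus _ _ _ _ _ _ H1 H2)].
  intros x Hx; unfold RD in Hx; simpl; field; lra. Qed.

Lemma rderiv_opp F t a : rderiv F t a -> rderiv (fun u => - F u) t (- a).
Proof. rewrite !rderiv_lim. intros H1. eapply limit_ext; [|apply (limit_Ropp _ _ _ _ H1)].
  intros x Hx; unfold RD in Hx; simpl; field; lra. Qed.

Lemma rderiv_minus F G t a b : rderiv F t a -> rderiv G t b -> rderiv (fun u => F u - G u) t (a - b).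
Proof. intros. apply (rderiv_ext (fun u => F u + - G u) _ _ (a + - b)); try (intros; ring). apply rderiv_plus; auto. apply rderiv_opp; auto. Qed.

Lemma rderiv_mult F G t a b : rderiv F t a -> rderiv G t b -> rderiv (fun u => F u * G u) t (a * G t + F t * b).
Proof. rewrite !rderiv_lim. intros H1 H2.
  assert (HG : limit1_in (fun h => G t + h * ((G (t+h) - G t)/h)) RD (G t + 0 * b) 0).
  { apply limit_plus. apply limit_free. apply limit_mul; auto. apply limit_id. }
  replace (G t + 0 * b) with (G t) in HG by ring.
  pose proof (limit_mul _ _ _ _ _ _ H1 HG) as H3.
  pose proof (limit_mul _ _ _ _ _ _ (limit_free (fun _ => F t) RD 0 0) H2) as H4.
  eapply limit_ext; [|apply (limit_plus _ _ _ _ _ _ H3 H4)].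
  intros x Hx; unfold RD in Hx; simpl; field; lra. Qed.

Lemma rderiv_scal c F t a : rderiv F t a -> rderiv (fun u => c * F u) t (c * a).
Proof. intros H. eapply rderiv_ext; [| |apply (rderiv_mult (fun _ => c) F t 0 a (rderiv_const c t) H)]; intros; simpl; ring. Qed.

Lemma rderiv_rsum N (F : nat -> R -> R) d t : (forall j, (j < N)%nat -> rderiv (F j) t (d j)) ->
  rderiv (fun u => rsum N (fun j => F j u)) t (rsum N d).
Proof. induction N; intros H; simpl.
  - apply rderiv_const.
  - apply rderiv_plus. apply IHN; intros; apply H; lia. apply H; lia. Qed.

Lemma rderiv_of_lim f t l : derivable_pt_lim f t l -> rderiv f t l.
Proof. intros H eps He. destruct (H eps He) as [del Hd]. exists del. split; [apply cond_pos|].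
  intros h Hh. apply Hd; [lra|]. rewrite Rabs_pos_eq; lra. Qed.

Lemma rderiv_rcont F t d : rderiv F t d -> forall eps, 0 < eps -> exists del, 0 < del /\
  forall u, t <= u < t + del -> Rabs (F u - F t) < eps.
Proof. intros H eps He. destruct (H 1 ltac:(lra)) as [del [Hd Hh]].
  exists (Rmin del (eps / (Rabs d + 1 + 1))). split.
  { apply Rmin_pos; auto. apply Rdiv_lt_0_compat; auto. pose proof (Rabs_pos d); lra. }
  intros u Hu. destruct (Req_dec u t). { subst. replace (F t - F t) with 0 by ring. rewrite Rabs_R0; lra. }
  set (h := u - t). assert (0 < h) by (unfold h; lra).
  assert (h < del) by (unfold h; pose proof (Rmin_l del (eps / (Rabs d + 1 + 1))); lra).
  assert (h < eps / (Rabs d + 1 + 1)) by (unfold h; pose proof (Rmin_r del (eps / (Rabs d + 1 + 1))); lra).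
  pose proof (Hh h ltac:(lra)) as Q1. replace (t + h) with u in Q1 by (unfold h; ring).
  assert (Rabs ((F u - F t) / h) < Rabs d + 1).
  { pose proof (Rabs_triang ((F u - F t)/h - d) d) as Q2. replace ((F u - F t)/h - d + d) with ((F u - F t)/h) in Q2 by ring. lra. }
  replace (F u - F t) with (h * ((F u - F t)/h)) by (field; lra).
  rewrite Rabs_mult, (Rabs_pos_eq h) by lra.
  assert (Hpos : 0 < Rabs d + 1 + 1) by (pose proof (Rabs_pos d); lra).
  match goal with Hx : h < eps / _ |- _ => rename Hx into Q3 end.
  apply (Rmult_lt_compat_r (Rabs d + 1 + 1)) in Q3; auto. unfold Rdiv in Q3. rewrite Rmult_assoc, Rinv_l, Rmult_1_r in Q3 by lra.
  pose proof (Rabs_pos ((F u - F t)/h)). nra. Qed.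

Lemma cont_eps f t : continuity_pt f t -> forall eps, 0 < eps -> exists del, 0 < del /\
  forall u, Rabs (u - t) < del -> Rabs (f u - f t) < eps.
Proof. unfold continuity_pt, continue_in, limit1_in, limit_in, D_x, no_cond; simpl; unfold R_dist.
  intros H eps He. destruct (H eps He) as [a [Ha Hx]]. exists a; split; auto. intros u Hu.
  destruct (Req_dec t u). subst. replace (f u - f u) with 0 by ring. rewrite Rabs_R0; lra. apply Hx; auto. Qed.

Lemma cont_plus f g t : continuity_pt f t -> continuity_pt g t -> continuity_pt (fun u => f u + g u) t.
Proof. intros; apply limit_plus; auto. Qed.
Lemma cont_minus f g t : continuity_pt f t -> continuity_pt g t -> continuity_pt (fun u => f u - g u) t.
Proof. intros; apply limit_minus; auto. Qed.
Lemma cont_mult f g t : continuity_pt f t -> continuity_pt g t -> continuity_pt (fun u => f u * g u) t.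
Proof. intros; apply limit_mul; auto. Qed.
Lemma cont_const c t : continuity_pt (fun _ => c) t.
Proof. apply continuity_pt_const. intros ? ?; reflexivity. Qed.
Lemma cont_lin c t : continuity_pt (fun u => c * u) t.
Proof. apply cont_mult. apply cont_const. apply derivable_continuous_pt, derivable_pt_id. Qed.
Lemma cont_abs f t : continuity_pt f t -> continuity_pt (fun u => Rabs (f u)) t.
Proof. intros H. apply (continuity_pt_comp f Rabs); auto. apply Rcontinuity_abs. Qed.
Lemma cont_rsum N (F : nat -> R -> R) t : (forall j, (j < N)%nat -> continuity_pt (F j) t) ->
  continuity_pt (fun u => rsum N (fun j => F j u)) t.
Proof. induction N; intros H; simpl. apply cont_const. apply cont_plus. apply IHN; intros; apply H; lia. apply H; lia. Qed.
Lemma cont_ext f g t : (forall u, f u = g u) -> continuity_pt f t -> continuity_pt g t.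
Proof. intros E H. unfold continuity_pt, continue_in in *. rewrite <- E. eapply limit_ext; [|exact H]. intros; auto. Qed.

Lemma mono_eps F d a b eps : a <= b -> 0 < eps ->
  (forall t, a <= t < b -> rderiv F t (d t)) ->
  (forall t, a <= t < b -> d t <= 0) ->
  (forall t, a < t <= b -> continuity_pt F t) ->
  F b <= F a + eps * (b - a) + eps.
Proof.
  intros Hab He Hd Hneg Hc.
  set (bd := fun u => F a + eps * (u - a) + eps).
  set (E := fun s => a <= s <= b /\ forall u, a <= u <= s -> F u <= bd u).
  assert (HEa : E a). { split; [lra|]. intros u Hu. replace u with a by lra. unfold bd; lra. }
  assert (Hbound : bound E). { exists b. intros s [Hs _]. lra. }
  destruct (completeness E Hbound (ex_intro _ a HEa)) as [c [Hub Hlub]].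
  assert (Hac : a <= c) by (apply Hub; auto).
  assert (Hcb : c <= b) by (apply Hlub; intros s [Hs _]; lra).
  assert (Hlt : forall u, a <= u < c -> F u <= bd u).
  { intros u Hu. destruct (classic (exists s, E s /\ u < s)) as [[s [[_ Hs] Hus]]|Hn].
    - apply Hs; lra.
    - exfalso. assert (c <= u); [|lra]. apply Hlub. intros s Hs. apply Rnot_lt_le. intro. apply Hn. eauto. }
  assert (Hcc : F c <= bd c).
  { destruct (Req_dec c a) as [->|Hca]. { unfold bd; lra. }
    apply Rnot_lt_le. intro Hgt.
    destruct (cont_eps F c (Hc c ltac:(lra)) (F c - bd c) ltac:(lra)) as [del [Hdel Hx]].
    set (u := Rmax a (c - del / 2)).
    assert (a <= u < c) by (unfold u; split; [apply Rmax_l|apply Rmax_lub_lt; lra]).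
    assert (Rabs (u - c) < del).
    { rewrite Rabs_left by lra. unfold u. pose proof (Rmax_r a (c - del/2)). lra. }
    pose proof (Hx u H0). pose proof (Hlt u H). rewrite Rabs_minus_sym in H1.
    pose proof (Rle_abs (F c - F u)). unfold bd in *. nra. }
  assert (HcE : forall u, a <= u <= c -> F u <= bd u).
  { intros u Hu. destruct (Req_dec u c). subst; auto. apply Hlt; lra. }
  destruct (Req_dec c b) as [<-|Hneq].
  { apply HcE; lra. }
  exfalso.
  destruct (Hd c ltac:(lra) (eps/2) ltac:(lra)) as [del [Hdel Hq]].
  pose proof (Hneg c ltac:(lra)).
  set (h := Rmin del (b - c) / 2).
  assert (Hh : 0 < h < del /\ c + h <= b).
  { unfold h. pose proof (Rmin_l del (b-c)). pose proof (Rmin_r del (b-c)).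
    assert (0 < Rmin del (b - c)) by (apply Rmin_pos; lra). lra. }
  assert (E (c + h)).
  { split; [lra|]. intros u Hu. destruct (Rle_dec u c). apply HcE; lra.
    set (h' := u - c). pose proof (Hq h' ltac:(unfold h'; lra)).
    replace (c + h') with u in H0 by (unfold h'; ring).
    pose proof (Rle_abs ((F u - F c) / h' - d c)).
    assert ((F u - F c)/h' < eps/2) by lra.
    assert (F u - F c < h' * (eps/2)).
    { assert (0 < h') by (unfold h'; lra). apply (Rmult_lt_compat_l h') in H2; auto.
      replace (h' * ((F u - F c) / h')) with (F u - F c) in H2 by (field; lra). lra. }
    pose proof (HcE c ltac:(lra)). unfold bd in *. unfold h' in *. nra. }
  pose proof (Hub _ H0). lra.
Qed.

Lemma mono F d a b : a <= b ->
  (forall t, a <= t < b -> rderiv F t (d t)) ->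
  (forall t, a <= t < b -> d t <= 0) ->
  (forall t, a < t <= b -> continuity_pt F t) ->
  F b <= F a.
Proof. intros Hab Hd Hn Hc. apply Rnot_lt_le. intro Hlt.
  set (eps := (F b - F a) / (2 * (b - a + 1))).
  assert (0 < eps) by (unfold eps; apply Rdiv_lt_0_compat; lra).
  pose proof (mono_eps F d a b eps Hab H Hd Hn Hc).
  assert (eps * (b - a + 1) * 2 = F b - F a) by (unfold eps; field; lra). nra. Qed.

Lemma mono_up F d a b : a <= b ->
  (forall t, a <= t < b -> rderiv F t (d t)) ->
  (forall t, a <= t < b -> 0 <= d t) ->
  (forall t, a < t <= b -> continuity_pt F t) ->
  F a <= F b.
Proof. intros Hab Hd Hn Hc.
  pose proof (mono (fun u => - F u) (fun u => - d u) a b Hab).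
  assert (- F b <= - F a); [|lra]. apply H. intros; apply rderiv_opp; auto. intros t Ht; pose proof (Hn t Ht); lra.
  intros t Ht. apply (cont_ext (fun u => 0 - F u)); [intros; ring|]. apply cont_minus; [apply cont_const|auto]. Qed.

Lemma lipschitz F d a b L : a <= b ->
  (forall t, a <= t < b -> rderiv F t (d t)) ->
  (forall t, a <= t < b -> Rabs (d t) <= L) ->
  (forall t, a < t <= b -> continuity_pt F t) ->
  Rabs (F b - F a) <= L * (b - a).
Proof. intros Hab Hd HL Hc.
  assert (H1 : F b - L * b <= F a - L * a).
  { apply (mono (fun u => F u - L * u) (fun u => d u - L) a b Hab).
    intros; apply rderiv_minus; auto; apply rderiv_lin.
    intros t Ht. pose proof (HL t Ht). pose proof (Rle_abs (d t)). lra.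
    intros; apply cont_minus; auto; apply cont_lin. }
  assert (H2 : - F b - L * b <= - F a - L * a).
  { apply (mono (fun u => - F u - L * u) (fun u => - d u - L) a b Hab).
    intros; apply rderiv_minus; [apply rderiv_opp; auto| apply rderiv_lin].
    intros t Ht. pose proof (HL t Ht). pose proof (Rle_abs (- d t)). rewrite Rabs_Ropp in H0. lra.
    intros; apply cont_minus; [|apply cont_lin]. apply (cont_ext (fun u => 0 - F u)); [intros; ring|]. apply cont_minus; [apply cont_const|auto]. }
  apply Rabs_le. lra. Qed.

Lemma sgn_mul x : sgn x * x = Rabs x.
Proof. unfold sgn. destruct (Rlt_dec 0 x). rewrite Rabs_pos_eq; lra.
  destruct (Rlt_dec x 0). rewrite Rabs_left; lra. replace x with 0 by lra. rewrite Rabs_R0; lra. Qed.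

Lemma sgn_abs x : Rabs (sgn x) <= 1.
Proof. unfold sgn. destruct (Rlt_dec 0 x); [|destruct (Rlt_dec x 0)]; unfold Rabs; destruct Rcase_abs; lra. Qed.

Lemma key_alg n l src dst P
  (Hg : undirected_edge_list n l src dst) (Hc : connected n l src dst)
  (HP : is_pinv l l (mmul n (mtr (Binc src dst)) (Binc src dst)) P)
  (beta : nat -> R) cg (Hcg : 0 <= cg)
  (Hbeta : forall i, (i < n)%nat -> cg * rsum l (fun e => Rabs (mmul l (Binc src dst) P i e)) <= beta i)
  gm (X XH F Kp : nat -> R) mb
  (HF : forall e, (e < l)%nat -> Rabs (F (dst e) - F (src e)) <= cg) :
  let Kst := cg * rsum l (fun c => rsum l (fun e => Rabs (P c e))) in
  let w := fun i => rsum l (fun e => Binc src dst i e * Kp e * sgn (XH (dst e) - XH (src e))) in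
  rsum n (fun i => (X i - mb) * (- gm * (X i - mb) + (F i - / INR n * rsum n F) - w i))
  + rsum l (fun e => (Kp e - Kst) * Rabs (XH (dst e) - XH (src e)))
  <= - gm * rsum n (fun i => (X i - mb) * (X i - mb))
     + rsum n (fun i => beta i * Rabs (X i - XH i) - w i * (X i - XH i)).
Proof.
  intros Kst w.
  destruct Hg as [Hv Hg2].
  set (B := Binc src dst) in *.
  set (M := mmul l B P) in *.
  set (g := fun e => F (dst e) - F (src e)).
  set (xi := fun e => XH (dst e) - XH (src e)).
  assert (Hn : (n > 0)%nat \/ n = 0%nat) by lia.
  assert (HFm : forall i, (i < n)%nat -> F i - / INR n * rsum n F = rsum l (fun e => M i e * g e)).
  { intros i Hi. apply proj_lemma; auto. split; auto. }
  assert (HsumF : rsum n (fun i => F i - / INR n * rsum n F) = 0).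
  { destruct Hn as [Hn|Hn]; [|subst; reflexivity].
    rewrite rsum_minus, rsum_const. assert (INR n > 0) by (apply lt_0_INR; lia). field. lra. }
  assert (Hwsum : rsum n w = 0).
  { unfold w. rewrite rsum_swap. rewrite (rsum_ext l _ (fun _ => 0)). apply rsum_zero.
    intros e He. destruct (Hv e He) as (?&?&?).
    rewrite (rsum_ext n _ (fun i => B i e * 1 * (Kp e * sgn (xi e)))) by (intros; unfold xi; ring).
    rewrite rsum_scalr. unfold B. rewrite Binc_sum_h; auto. ring. }
  assert (HwXH : rsum n (fun i => XH i * w i) = rsum l (fun e => Kp e * Rabs (xi e))).
  { unfold w. rewrite (rsum_ext n _ (fun i => rsum l (fun e => B i e * XH i * (Kp e * sgn (xi e))))).
    2:{ intros. rewrite <- rsum_scal. apply rsum_ext; intros; unfold xi; ring. }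
    rewrite rsum_swap. apply rsum_ext. intros e He. destruct (Hv e He) as (?&?&?).
    rewrite rsum_scalr. unfold B. rewrite Binc_sum_h; auto. fold (xi e). rewrite <- sgn_mul. ring. }
  assert (HA1 : rsum n (fun i => XH i * (F i - / INR n * rsum n F)) <= Kst * rsum l (fun e => Rabs (xi e))).
  { rewrite (rsum_ext n _ (fun i => rsum l (fun e => XH i * M i e * g e))).
    2:{ intros i Hi. rewrite HFm by auto. rewrite <- rsum_scal. apply rsum_ext; intros; ring. }
    rewrite rsum_swap.
    rewrite (rsum_ext l _ (fun e => rsum l (fun c => P c e * xi c) * g e)).
    2:{ intros e He. rewrite rsum_scalr. f_equal. unfold M, mmul.
        rewrite (rsum_ext n _ (fun i => rsum l (fun c => B i c * XH i * P c e))).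
        2:{ intros. rewrite <- rsum_scal. apply rsum_ext; intros; ring. }
        rewrite rsum_swap. apply rsum_ext. intros c Hc'. destruct (Hv c Hc') as (?&?&?).
        rewrite rsum_scalr. unfold B. rewrite Binc_sum_h; auto. unfold xi; ring. }
    rewrite (rsum_ext l _ (fun e => rsum l (fun c => P c e * xi c * g e))) by (intros; rewrite rsum_scalr; auto).
    rewrite rsum_swap.
    rewrite <- rsum_scal. apply rsum_le. intros c Hc'.
    eapply Rle_trans. apply Rle_abs. eapply Rle_trans. apply rsum_abs.
    apply Rle_trans with (rsum l (fun e => Rabs (P c e) * cg) * Rabs (xi c)).
    { rewrite <- rsum_scalr. apply rsum_le. intros e He. rewrite !Rabs_mult.
      pose proof (HF e He). pose proof (Rabs_pos (P c e)). pose proof (Rabs_pos (xi c)). fold (g e) in H. pose proof (Rmult_le_pos _ _ H0 H1). nra. }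
    rewrite rsum_scalr. unfold Kst. apply Rmult_le_compat_r. apply Rabs_pos.
    rewrite Rmult_comm. apply Rmult_le_compat_l; auto.
    apply (rsum_term_le l (fun c => rsum l (fun e => Rabs (P c e)))); auto.
    intros; apply rsum_nonneg; intros; apply Rabs_pos. }
  assert (HA2 : rsum n (fun i => (X i - XH i) * (F i - / INR n * rsum n F)) <= rsum n (fun i => beta i * Rabs (X i - XH i))).
  { apply rsum_le. intros i Hi. rewrite HFm by auto.
    eapply Rle_trans. apply Rle_abs. rewrite Rabs_mult. rewrite (Rmult_comm (beta i)).
    apply Rmult_le_compat_l. apply Rabs_pos.
    eapply Rle_trans. apply rsum_abs. eapply Rle_trans; [|apply (Hbeta i Hi)].
    rewrite <- rsum_scal. apply rsum_le. intros e He. rewrite Rabs_mult. pose proof (HF e He).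
    pose proof (Rabs_pos (M i e)). fold (g e) in H. nra. }
  set (fc := fun i => F i - / INR n * rsum n F) in *.
  rewrite (rsum_ext n _ (fun i => - gm * ((X i - mb) * (X i - mb)) + (XH i * fc i + (X i - XH i) * fc i - mb * fc i)
      - (XH i * w i + (X i - XH i) * w i - mb * w i))) by (intros; unfold fc; ring).
  rewrite rsum_minus, rsum_plus, rsum_scal, !rsum_minus, !rsum_plus, !rsum_scal, HsumF, Hwsum, HwXH.
  rewrite (rsum_ext l (fun e => (Kp e - Kst) * Rabs (XH (dst e) - XH (src e))) (fun e => Kp e * Rabs (xi e) - Kst * Rabs (xi e))) by (intros; unfold xi; ring).
  rewrite rsum_minus, rsum_scal.
  rewrite (rsum_ext n (fun j => w j * (X j - XH j)) (fun j => (X j - XH j) * w j)) by (intros; ring). unfold fc in *.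
  lra.
Qed.

Lemma pair_bound l src dst (p : nat -> R -> R) c :
  (forall e t, (e < l)%nat -> 0 <= t -> Rabs (p (dst e) t - p (src e) t) <= c) ->
  forall i j, clos_refl_trans nat (adj l src dst) i j -> exists C, forall t, 0 <= t -> Rabs (p i t - p j t) <= C.
Proof. intros Hc i j H. induction H as [x y [e (He & <- & <-)] | x | x y z _ [C1 H1] _ [C2 H2]].
  - exists c. intros t Ht. rewrite Rabs_minus_sym. auto.
  - exists 0. intros. replace (p x t - p x t) with 0 by ring. rewrite Rabs_R0; lra.
  - exists (C1 + C2). intros t Ht. replace (p x t - p z t) with ((p x t - p y t) + (p y t - p z t)) by ring.
    eapply Rle_trans. apply Rabs_triang. pose proof (H1 t Ht); pose proof (H2 t Ht); lra. Qed.

Lemma unif_bound n l src dst (p : nat -> R -> R) c : connected n l src dst ->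
  (forall e t, (e < l)%nat -> 0 <= t -> Rabs (p (dst e) t - p (src e) t) <= c) ->
  forall i, (i < n)%nat -> exists C, 0 <= C /\ forall j t, (j < n)%nat -> 0 <= t -> Rabs (p i t - p j t) <= C.
Proof. intros Hconn Hc i Hi.
  assert (forall N, (N <= n)%nat -> exists C, 0 <= C /\ forall j t, (j < N)%nat -> 0 <= t -> Rabs (p i t - p j t) <= C).
  { induction N; intros HN. - exists 0. split; [lra|]. intros; lia.
    - destruct IHN as [C1 [HC1 H1]]; [lia|]. destruct (pair_bound l src dst p c Hc i N (Hconn i N Hi ltac:(lia))) as [C2 H2].
      exists (Rmax C1 C2). split. eapply Rle_trans; [apply HC1|apply Rmax_l].
      intros j t Hj Ht. destruct (Nat.eq_dec j N). subst. eapply Rle_trans; [apply H2; auto|apply Rmax_r].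
      eapply Rle_trans; [apply H1; auto; lia|apply Rmax_l]. }
  apply H; lia. Qed.

Lemma mean_bound n (p : nat -> R -> R) i C : (0 < n)%nat ->
  (forall j t, (j < n)%nat -> 0 <= t -> Rabs (p i t - p j t) <= C) ->
  forall t, 0 <= t -> Rabs (/ INR n * rsum n (fun j => p j t) - p i t) <= C.
Proof. intros Hn H t Ht. assert (INR n > 0) by (apply lt_0_INR; lia).
  replace (/ INR n * rsum n (fun j => p j t) - p i t) with (/ INR n * rsum n (fun j => p j t - p i t)).
  2:{ rewrite rsum_minus, rsum_const. field. lra. }
  rewrite Rabs_mult, Rabs_pos_eq by (left; apply Rinv_0_lt_compat; lra).
  apply Rle_trans with (/ INR n * rsum n (fun _ => C)).
  { apply Rmult_le_compat_l. left; apply Rinv_0_lt_compat; lra. eapply Rle_trans; [apply rsum_abs|].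
    apply rsum_le. intros j Hj. rewrite Rabs_minus_sym. auto. }
  rewrite rsum_const. right. field. lra. Qed.

Lemma kron_row r n l M i : (0 < r)%nat -> (i < n)%nat ->
  rsum l (fun e => Rabs (M i e)) <= infnorm (n * r) (l * r) (kronI r M).
Proof. intros Hr Hi. unfold infnorm.
  eapply Rle_trans; [|apply (rmaxn_ge (n*r) (fun a => rsum (l * r) (fun b => Rabs (kronI r M a b))) (i * r)); nia].
  rewrite rsum_mul_split. right. apply rsum_ext. intros e He.
  unfold kronI.
  assert (Hir : (i * r / r = i)%nat) by (apply Nat.div_mul; lia).
  assert (Hirm : ((i * r) mod r = 0)%nat) by (symmetry; apply (Nat.mod_unique _ _ i); lia).
  rewrite Hir, Hirm.
  rewrite (rsum_ext r _ (fun k => if Nat.eqb 0 k then Rabs (M i e) else 0)).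
  { rewrite rsum_single; auto. }
  intros k Hk.
  assert (Hd : ((e * r + k) / r = e)%nat) by (symmetry; apply (Nat.div_unique _ _ _ k); lia).
  assert (Hm : ((e * r + k) mod r = k)%nat) by (symmetry; apply (Nat.mod_unique _ _ e); lia).
  rewrite Hd, Hm. destruct (Nat.eqb 0 k). rewrite Rmult_1_r; auto. rewrite Rmult_0_r, Rabs_R0; auto. Qed.

Lemma stay_nonneg (E D : R -> R) t0 : 0 < E t0 ->
  (forall t, t0 <= t -> rderiv E t (D t)) ->
  (forall t, t0 < t -> continuity_pt E t) ->
  (forall t, t0 <= t -> E t <= 0 -> 0 <= D t) ->
  forall t, t0 <= t -> 0 <= E t.
Proof.
  intros H0 Hd Hc Hsg t1 Ht1. apply Rnot_lt_le. intro Hneg.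
  set (S := fun s => t0 <= s <= t1 /\ 0 <= E s).
  assert (HS0 : S t0) by (split; lra).
  assert (Hb : bound S) by (exists t1; intros s [Hs _]; lra).
  destruct (completeness S Hb (ex_intro _ t0 HS0)) as [a [Hub Hlub]].
  assert (Ha0 : t0 <= a) by (apply Hub; auto).
  assert (Ha1 : a <= t1) by (apply Hlub; intros s [Hs _]; lra).
  assert (Hafter : forall u, a < u <= t1 -> E u < 0).
  { intros u Hu. apply Rnot_le_lt. intro. assert (u <= a) by (apply Hub; split; [lra|auto]). lra. }
  assert (Hage : 0 <= E a).
  { destruct (Req_dec a t0) as [->|Hne]; [lra|].
    apply Rnot_lt_le. intro Hlt.
    destruct (cont_eps E a (Hc a ltac:(lra)) (- E a) ltac:(lra)) as [del [Hdel Hx]].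
    destruct (classic (exists s, S s /\ a - del < s)) as [[s [[Hs1 Hs2] Hs3]]|Hn].
    - assert (s <= a) by (apply Hub; split; auto).
      assert (Rabs (s - a) < del) by (apply Rabs_def1; lra).
      pose proof (Hx s H1). pose proof (Rle_abs (E s - E a)). lra.
    - assert (a <= a - del); [|lra]. apply Hlub. intros s Hs. apply Rnot_lt_le. intro. apply Hn; eauto. }
  assert (Hlt1 : a < t1) by (destruct (Req_dec a t1); [subst; lra|lra]).
  assert (Hale : E a <= 0).
  { apply Rnot_lt_le. intro Hpos.
    destruct (rderiv_rcont E a (D a) (Hd a Ha0) (E a) Hpos) as [del [Hdel Hx]].
    set (u := Rmin (a + del/2) t1).
    assert (a < u <= t1) by (unfold u; split; [apply Rmin_glb_lt; lra| apply Rmin_r]).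
    assert (u < a + del) by (unfold u; pose proof (Rmin_l (a + del/2) t1); lra).
    pose proof (Hx u ltac:(lra)). pose proof (Hafter u H). pose proof (Rle_abs (E u - E a)).
    pose proof (Rabs_minus_sym (E u) (E a)). pose proof (Rle_abs (E a - E u)). lra. }
  assert (E a <= E t1).
  { apply (mono_up E D a t1); [lra| | |].
    - intros; apply Hd; lra.
    - intros t Ht. apply Hsg; [lra|]. destruct (Req_dec t a). subst; auto. left; apply Hafter; lra.
    - intros; apply Hc; lra. }
  lra.
Qed.

Lemma rderiv_halfsq F t a c : rderiv F t a -> rderiv (fun u => / 2 * ((F u - c) * (F u - c))) t ((F t - c) * a).
Proof. intros H. assert (H1 : rderiv (fun u => F u - c) t (a - 0)) by (apply rderiv_minus; auto; apply rderiv_const).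
  pose proof (rderiv_scal (/2) _ _ _ (rderiv_mult _ _ _ _ _ H1 H1)). eapply rderiv_ext; [| |exact H0]; intros; simpl; field. Qed.

Lemma cont_halfsq F t c : continuity_pt F t -> continuity_pt (fun u => / 2 * ((F u - c) * (F u - c))) t.
Proof. intros H. apply cont_mult. apply cont_const. apply cont_mult; apply cont_minus; auto; apply cont_const. Qed.

Lemma Binc_abs src dst i e : Rabs (Binc src dst i e) <= 1.
Proof. unfold Binc. destruct (Nat.eqb (dst e) i); [|destruct (Nat.eqb (src e) i)]; unfold Rabs; destruct Rcase_abs; lra. Qed.

Lemma halfsq_bound y W0 : / 2 * ((y - 0) * (y - 0)) <= W0 -> Rabs y <= 1 + 2 * W0.
Proof. intros H. destruct (Rle_dec (Rabs y) 1). nra.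
  assert (Rabs y * Rabs y = y * y) by (rewrite <- Rabs_mult; apply Rabs_pos_eq; nra). nra. Qed.

Lemma halfsq_nonneg y : 0 <= / 2 * (y * y).
Proof. nra. Qed.

Lemma abs4 g x y u v : 0 <= g -> Rabs (- g * x - g * y - u - v) <= g * Rabs x + g * Rabs y + Rabs u + Rabs v.
Proof. intros Hg. replace (- g * x - g * y - u - v) with (- (g * x) + - (g * y) + - u + - v) by ring.
  eapply Rle_trans. apply Rabs_triang. eapply Rle_trans. apply Rplus_le_compat_r. apply Rabs_triang.
  eapply Rle_trans. apply Rplus_le_compat_r. apply Rplus_le_compat_r. apply Rabs_triang.
  rewrite !Rabs_Ropp, !Rabs_mult, (Rabs_pos_eq g Hg). lra. Qed.
Theorem theorem2
  (n r l : nat) (src dst : nat -> nat)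
  (* (A1) *)
  (Hgraph : undirected_edge_list n l src dst)
  (Hconn : connected n l src dst)
  (* reference signals, continuously differentiable *)
  (phi dphi : nat -> nat -> R -> R)
  (Hphi : forall i k t, (i < n)%nat -> (k < r)%nat -> derivable_pt_lim (phi i k) t (dphi i k t))
  (Hdphi : forall i k t, (i < n)%nat -> (k < r)%nat -> continuity_pt (dphi i k) t)
  (* (A2) *)
  (varphi dvarphi : R)
  (HA2 : forall t, 0 <= t -> forall e k, (e < l)%nat -> (k < r)%nat ->
     Rabs (phi (dst e) k t - phi (src e) k t) <= varphi /\
     Rabs (dphi (dst e) k t - dphi (src e) k t) <= dvarphi)
  (gamma : R) (Hgamma : 0 < gamma)
  (* (A3), with P = (B^T B)^+ *)
  (P : nat -> nat -> R)
  (HP : is_pinv l l (mmul n (mtr (Binc src dst)) (Binc src dst)) P)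
  (beta : nat -> R)
  (HA3 : forall i, (i < n)%nat ->
     (gamma * varphi + dvarphi) *
       infnorm (n * r) (l * r) (kronI r (mmul l (Binc src dst) P)) <= beta i)
  (* parameters of the triggering mechanism *)
  (alpha delta theta : nat -> R)
  (Halpha : forall i, (i < n)%nat -> 0 < alpha i)
  (Hdelta : forall i, (i < n)%nat -> 1 <= delta i)
  (Htheta : forall i, (i < n)%nat -> 0 < theta i < 1)
  (t0 : R) (Ht0 : 0 <= t0)
  (* a solution: z, adaptive gains kappa, internal states eta,
     triggering instants trig, broadcast states xhat *)
  (z : nat -> nat -> R -> R) (kappa : nat -> nat -> R -> R)
  (eta : nat -> R -> R) (trig : nat -> R -> Prop) (xhat : nat -> nat -> R -> R)
  (* z dynamics: dz = -gamma z - w *)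
  (Hz_cont : forall i k t, (i < n)%nat -> (k < r)%nat -> t0 < t -> continuity_pt (z i k) t)
  (Hz : forall i k t, (i < n)%nat -> (k < r)%nat -> t0 <= t ->
     rderiv (z i k) t (- gamma * z i k t - w_sig l src dst kappa xhat i k t))
  (* gain adaptation *)
  (Hk_cont : forall e k t, (e < l)%nat -> (k < r)%nat -> t0 < t -> continuity_pt (kappa e k) t)
  (Hk : forall e k t, (e < l)%nat -> (k < r)%nat -> t0 <= t ->
     rderiv (kappa e k) t (Rabs (xi_hat src dst xhat e k t)))
  (Hk0 : forall e k, (e < l)%nat -> (k < r)%nat -> 0 < kappa e k t0)
  (Hksym : forall e e' k, (e < l)%nat -> (e' < l)%nat -> (k < r)%nat ->
     src e' = dst e -> dst e' = src e -> kappa e k t0 = kappa e' k t0)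
  (* internal dynamics of each agent, eps = x - xhat *)
  (Heta_cont : forall i t, (i < n)%nat -> t0 < t -> continuity_pt (eta i) t)
  (Heta : forall i t, (i < n)%nat -> t0 <= t ->
     rderiv (eta i) t
       (- alpha i * eta i t
        - delta i * (beta i * rsum r (fun k => Rabs (z i k t + phi i k t - xhat i k t))
                     - rsum r (fun k => w_sig l src dst kappa xhat i k t
                                        * (z i k t + phi i k t - xhat i k t)))))
  (Heta0 : forall i, (i < n)%nat -> 0 < eta i t0)
  (* triggering: t^i_1 = t0 *)
  (Htrig0 : forall i, (i < n)%nat -> trig i t0)
  (Htrig_ge : forall i t, (i < n)%nat -> trig i t -> t0 <= t)
  (* hat x_i(t) = x_i(t^i_{k_i(t)}), t^i_{k_i(t)} = max{t^i_k <= t} *)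
  (Hxhat : forall i t, (i < n)%nat -> t0 <= t ->
     exists s, trig i s /\ s <= t /\ (forall u, s < u <= t -> ~ trig i u) /\
       forall k, (k < r)%nat -> xhat i k t = z i k s + phi i k s)
  (* every triggering instant after t0 is the first time after the previous
     one at which the triggering condition holds *)
  (Htrig_next : forall i t, (i < n)%nat -> trig i t -> t0 < t ->
     exists s, trig i s /\ s < t /\ (forall u, s < u < t -> ~ trig i u) /\
       trig_cond r (theta i) (beta i) (fun k u => z i k u + phi i k u)
         (w_sig l src dst kappa xhat i) (eta i) s t /\
       (forall u, s < u < t ->
         ~ trig_cond r (theta i) (beta i) (fun k u => z i k u + phi i k u)
             (w_sig l src dst kappa xhat i) (eta i) s u))
  (* ... and the condition holding after a triggering instant forces a
     next triggering instant *)
  (Htrig_fire : forall i s t, (i < n)%nat -> trig i s -> s < t ->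
     trig_cond r (theta i) (beta i) (fun k u => z i k u + phi i k u)
       (w_sig l src dst kappa xhat i) (eta i) s t ->
     exists u, trig i u /\ s < u <= t)
  :
  forall i k, (i < n)%nat -> (k < r)%nat ->
  forall eps, 0 < eps -> exists T, forall t, T <= t ->
    Rabs (z i k t + phi i k t - / INR n * rsum n (fun j => phi j k t)) < eps.
Proof.
  intros i0 k0 Hii Hkk eps Heps.
  assert (Hn0 : (0 < n)%nat) by lia.
  assert (Hr0 : (0 < r)%nat) by lia.
  assert (HnR : INR n > 0) by (apply lt_0_INR; lia).
  destruct Hgraph as [Hv Hg2].
  assert (Hgraph : undirected_edge_list n l src dst) by (split; auto).
  pose (cg := Rmax (gamma * varphi + dvarphi) 0).
  assert (Hcg : 0 <= cg) by apply Rmax_r.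
  assert (Hcg1 : gamma * varphi + dvarphi <= cg) by apply Rmax_l.
  assert (Hbeta : forall i, (i < n)%nat -> cg * rsum l (fun e => Rabs (mmul l (Binc src dst) P i e)) <= beta i).
  { intros i Hi. destruct l as [|l'].
    - simpl. pose proof (HA3 i Hi).
      assert (forall N, rmaxn N (fun _ => 0) = 0) as HZ.
      { induction N; simpl; auto. rewrite IHN. unfold Rmax; destruct Rle_dec; lra. }
      assert (infnorm (n*r) (0*r) (kronI r (mmul 0 (Binc src dst) P)) = 0) as HI by (unfold infnorm; simpl; apply HZ).
      rewrite HI in H. lra.
    - destruct (HA2 0 ltac:(lra) 0%nat k0 ltac:(lia) Hkk) as [Ha Hb].
      pose proof (Rabs_pos (phi (dst 0%nat) k0 0 - phi (src 0%nat) k0 0)).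
      pose proof (Rabs_pos (dphi (dst 0%nat) k0 0 - dphi (src 0%nat) k0 0)).
      assert (cg = gamma * varphi + dvarphi) by (unfold cg; apply Rmax_left; nra).
      rewrite H1. eapply Rle_trans; [|apply (HA3 i Hi)]. apply Rmult_le_compat_l. nra.
      apply kron_row; auto. }
  pose (Kst := cg * rsum l (fun c => rsum l (fun e => Rabs (P c e)))).
  pose (w := fun i k u => w_sig l src dst kappa xhat i k u).
  pose (xt := fun i k u => z i k u + phi i k u - / INR n * rsum n (fun j => phi j k u)).
  pose (Dxt := fun i k u => - gamma * z i k u - w i k u + dphi i k u - / INR n * rsum n (fun j => dphi j k u)).
  pose (Sx := fun i u => beta i * rsum r (fun k => Rabs (z i k u + phi i k u - xhat i k u))
                     - rsum r (fun k => w i k u * (z i k u + phi i k u - xhat i k u))).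
  pose (ER := fun i u => - alpha i * eta i u - delta i * Sx i u).
  assert (HetaD : forall i t, (i < n)%nat -> t0 <= t -> eta i t <= 0 -> 0 <= ER i t).
  { intros i t Hi Ht Hle. destruct (Hxhat i t Hi Ht) as [s [Ts [Hst [Hno Hx]]]].
    pose proof (Halpha i Hi). pose proof (Hdelta i Hi). pose proof (Htheta i Hi).
    unfold ER. destruct (Req_dec s t) as [->|Hne].
    - assert (Sx i t = 0).
      { unfold Sx. rewrite (rsum_ext r _ (fun _ => 0)). rewrite (rsum_ext r (fun k => w i k t * _) (fun _ => 0)).
        rewrite rsum_zero; ring.
        intros k Hkr. rewrite Hx by auto. ring. intros k Hkr. rewrite Hx by auto. replace (z i k t + phi i k t - (z i k t + phi i k t)) with 0 by ring. apply Rabs_R0. }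
      rewrite H2. nra.
    - assert (~ trig_cond r (theta i) (beta i) (fun k u => z i k u + phi i k u)
             (w_sig l src dst kappa xhat i) (eta i) s t).
      { intro Hcnd. destruct (Htrig_fire i s t Hi Ts ltac:(lra) Hcnd) as [u [Tu Hu]]. apply (Hno u); auto. }
      unfold trig_cond in H2.
      assert (Sx i t = beta i * rsum r (fun k => Rabs (z i k t + phi i k t - (z i k s + phi i k s)))
             - rsum r (fun k => w_sig l src dst kappa xhat i k t * (z i k t + phi i k t - (z i k s + phi i k s)))).
      { unfold Sx, w. f_equal. f_equal. apply rsum_ext; intros; rewrite Hx; auto. apply rsum_ext; intros; rewrite Hx; auto. }
      rewrite <- H3 in H2. apply Rnot_ge_lt in H2.
      assert (Sx i t < 0). { apply Rnot_le_lt. intro. nra. }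
      nra. }
  assert (Hetanonneg : forall i t, (i < n)%nat -> t0 <= t -> 0 <= eta i t).
  { intros i t Hi Ht. apply (stay_nonneg (eta i) (ER i) t0);
    [apply Heta0; auto | intros; apply Heta; auto | intros; apply Heta_cont; auto | intros; apply HetaD; auto | auto]. }
  assert (Hphic : forall i k t, (i < n)%nat -> (k < r)%nat -> continuity_pt (phi i k) t).
  { intros. apply derivable_continuous_pt. exists (dphi i k t). apply Hphi; auto. }
  assert (HDxt : forall i k t, (i < n)%nat -> (k < r)%nat -> t0 <= t -> rderiv (xt i k) t (Dxt i k t)).
  { intros i k t Hi Hkr Ht.
    assert (rderiv (fun u => z i k u + phi i k u - / INR n * rsum n (fun j => phi j k u)) t
              ((- gamma * z i k t - w_sig l src dst kappa xhat i k t + dphi i k t) - / INR n * rsum n (fun j => dphi j k t))).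
    { apply rderiv_minus. apply rderiv_plus. apply Hz; auto. apply rderiv_of_lim, Hphi; auto.
      apply rderiv_scal. apply (rderiv_rsum n (fun j u => phi j k u)). intros; apply rderiv_of_lim, Hphi; auto. }
    eapply rderiv_ext; [| |exact H]. intros; reflexivity. unfold Dxt, w; ring. }
  assert (Hxtc : forall i k t, (i < n)%nat -> (k < r)%nat -> t0 < t -> continuity_pt (xt i k) t).
  { intros i k t Hi Hkr Ht. unfold xt. apply cont_minus. apply cont_plus. apply Hz_cont; auto. apply Hphic; auto.
    apply cont_mult. apply cont_const. apply (cont_rsum n (fun j u => phi j k u)). intros; apply Hphic; auto. }
  pose (W := fun u => rsum r (fun k => rsum n (fun i => / 2 * ((xt i k u - 0) * (xt i k u - 0))))
                    + rsum r (fun k => rsum l (fun e => / 2 * ((kappa e k u - Kst) * (kappa e k u - Kst))))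
                    + rsum n (fun i => / delta i * eta i u)).
  pose (DW := fun t => rsum r (fun k => rsum n (fun i => (xt i k t - 0) * Dxt i k t))
                    + rsum r (fun k => rsum l (fun e => (kappa e k t - Kst) * Rabs (xi_hat src dst xhat e k t)))
                    + rsum n (fun i => / delta i * ER i t)).
  assert (HW : forall t, t0 <= t -> rderiv W t (DW t)).
  { intros t Ht. unfold W, DW. apply rderiv_plus; [apply rderiv_plus|].
    - apply (rderiv_rsum r (fun k u => rsum n (fun i => / 2 * ((xt i k u - 0) * (xt i k u - 0))))).
      intros k Hkr. apply (rderiv_rsum n (fun i u => / 2 * ((xt i k u - 0) * (xt i k u - 0)))).
      intros i Hi. apply rderiv_halfsq. apply HDxt; auto.
    - apply (rderiv_rsum r (fun k u => rsum l (fun e => / 2 * ((kappa e k u - Kst) * (kappa e k u - Kst))))).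
      intros k Hkr. apply (rderiv_rsum l (fun e u => / 2 * ((kappa e k u - Kst) * (kappa e k u - Kst)))).
      intros e He. apply rderiv_halfsq. apply Hk; auto.
    - apply (rderiv_rsum n (fun i u => / delta i * eta i u)). intros i Hi. apply rderiv_scal. apply Heta; auto. }
  assert (HWc : forall t, t0 < t -> continuity_pt W t).
  { intros t Ht. unfold W. apply cont_plus; [apply cont_plus|].
    - apply (cont_rsum r (fun k u => rsum n (fun i => / 2 * ((xt i k u - 0) * (xt i k u - 0))))).
      intros k Hkr. apply (cont_rsum n (fun i u => / 2 * ((xt i k u - 0) * (xt i k u - 0)))).
      intros i Hi. apply cont_halfsq. apply Hxtc; auto.
    - apply (cont_rsum r (fun k u => rsum l (fun e => / 2 * ((kappa e k u - Kst) * (kappa e k u - Kst))))).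
      intros k Hkr. apply (cont_rsum l (fun e u => / 2 * ((kappa e k u - Kst) * (kappa e k u - Kst)))).
      intros e He. apply cont_halfsq. apply Hk_cont; auto.
    - apply (cont_rsum n (fun i u => / delta i * eta i u)). intros i Hi. apply cont_mult. apply cont_const. apply Heta_cont; auto. }
  assert (Hkin : forall k t, (k < r)%nat -> t0 <= t ->
     rsum n (fun i => (xt i k t - 0) * Dxt i k t)
     + rsum l (fun e => (kappa e k t - Kst) * Rabs (xi_hat src dst xhat e k t))
     <= - gamma * rsum n (fun i => xt i k t * xt i k t)
        + rsum n (fun i => beta i * Rabs (z i k t + phi i k t - xhat i k t) - w i k t * (z i k t + phi i k t - xhat i k t))).
  { intros k t Hkr Ht.
    assert (HF : forall e, (e < l)%nat -> Rabs ((fun i => gamma * phi i k t + dphi i k t) (dst e) - (fun i => gamma * phi i k t + dphi i k t) (src e)) <= cg).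
    { intros e He. simpl. destruct (HA2 t ltac:(lra) e k He Hkr) as [Ha Hb].
      replace (gamma * phi (dst e) k t + dphi (dst e) k t - (gamma * phi (src e) k t + dphi (src e) k t))
        with (gamma * (phi (dst e) k t - phi (src e) k t) + (dphi (dst e) k t - dphi (src e) k t)) by ring.
      eapply Rle_trans. apply Rabs_triang. rewrite Rabs_mult, (Rabs_pos_eq gamma) by lra. nra. }
    pose proof (key_alg n l src dst P Hgraph Hconn HP beta cg Hcg Hbeta gamma
      (fun i => z i k t + phi i k t) (fun i => xhat i k t) (fun i => gamma * phi i k t + dphi i k t)
      (fun e => kappa e k t) (/ INR n * rsum n (fun j => phi j k t)) HF) as K.
    cbv zeta beta in K.
    assert (HmF : / INR n * rsum n (fun i => gamma * phi i k t + dphi i k t)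
                = gamma * (/ INR n * rsum n (fun j => phi j k t)) + / INR n * rsum n (fun j => dphi j k t)).
    { rewrite rsum_plus, rsum_scal. ring. }
    rewrite HmF in K. fold Kst in K.
    replace (rsum n (fun i => (xt i k t - 0) * Dxt i k t)) with
      (rsum n (fun i => (z i k t + phi i k t - / INR n * rsum n (fun j => phi j k t)) *
         (- gamma * (z i k t + phi i k t - / INR n * rsum n (fun j => phi j k t)) +
          (gamma * phi i k t + dphi i k t - (gamma * (/ INR n * rsum n (fun j => phi j k t)) + / INR n * rsum n (fun j => dphi j k t))) -
          rsum l (fun e => Binc src dst i e * kappa e k t * sgn (xhat (dst e) k t - xhat (src e) k t))))).
    2:{ apply rsum_ext. intros i Hi. unfold xt, Dxt, w, w_sig, xi_hat. ring. }
    replace (rsum n (fun i => xt i k t * xt i k t)) with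
      (rsum n (fun i => (z i k t + phi i k t - / INR n * rsum n (fun j => phi j k t)) * (z i k t + phi i k t - / INR n * rsum n (fun j => phi j k t)))) by (apply rsum_ext; intros; unfold xt; ring).
    replace (rsum n (fun i => beta i * Rabs (z i k t + phi i k t - xhat i k t) - w i k t * (z i k t + phi i k t - xhat i k t))) with
      (rsum n (fun i => beta i * Rabs (z i k t + phi i k t - xhat i k t) - rsum l (fun e => Binc src dst i e * kappa e k t * sgn (xhat (dst e) k t - xhat (src e) k t)) * (z i k t + phi i k t - xhat i k t))) by (apply rsum_ext; intros; unfold w, w_sig, xi_hat; ring).
    unfold xi_hat. exact K. }
  assert (HDW : forall t, t0 <= t -> DW t <= - gamma * (xt i0 k0 t * xt i0 k0 t)).
  { intros t Ht. unfold DW.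
    assert (H1 : rsum r (fun k => rsum n (fun i => (xt i k t - 0) * Dxt i k t))
               + rsum r (fun k => rsum l (fun e => (kappa e k t - Kst) * Rabs (xi_hat src dst xhat e k t)))
               <= - gamma * rsum r (fun k => rsum n (fun i => xt i k t * xt i k t)) + rsum n (fun i => Sx i t)).
    { rewrite <- rsum_plus, <- rsum_scal.
      assert (rsum n (fun i => Sx i t) = rsum r (fun k => rsum n (fun i => beta i * Rabs (z i k t + phi i k t - xhat i k t) - w i k t * (z i k t + phi i k t - xhat i k t)))) as ->.
      { rewrite rsum_swap. apply rsum_ext. intros i Hi. unfold Sx. rewrite rsum_minus, rsum_scal. reflexivity. }
      rewrite <- rsum_plus. apply rsum_le. intros k Hkr. apply Hkin; auto. }
    assert (H2 : rsum n (fun i => / delta i * ER i t) = - rsum n (fun i => alpha i * eta i t / delta i) - rsum n (fun i => Sx i t)).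
    { rewrite (rsum_ext n _ (fun i => - (alpha i * eta i t / delta i) - Sx i t)).
      rewrite rsum_minus. rewrite (rsum_ext n (fun i => - _) (fun i => -1 * (alpha i * eta i t / delta i))) by (intros; ring).
      rewrite rsum_scal. ring.
      intros i Hi. unfold ER. pose proof (Hdelta i Hi). field. lra. }
    assert (H3 : 0 <= rsum n (fun i => alpha i * eta i t / delta i)).
    { apply rsum_nonneg. intros i Hi. pose proof (Halpha i Hi). pose proof (Hdelta i Hi). pose proof (Hetanonneg i t Hi Ht).
      unfold Rdiv. apply Rmult_le_pos. nra. left; apply Rinv_0_lt_compat; lra. }
    assert (H4 : xt i0 k0 t * xt i0 k0 t <= rsum r (fun k => rsum n (fun i => xt i k t * xt i k t))).
    { eapply Rle_trans; [|apply (rsum_term_le r (fun k => rsum n (fun i => xt i k t * xt i k t)) k0)]; auto.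
      apply (rsum_term_le n (fun i => xt i k0 t * xt i k0 t) i0); auto. intros; nra.
      intros; apply rsum_nonneg; intros; nra. }
    nra. }
  assert (HWdec : forall a b, t0 <= a -> a <= b -> W b <= W a).
  { intros a b Ha Hab. apply (mono W DW a b Hab).
    intros; apply HW; lra. intros t Ht. pose proof (HDW t ltac:(lra)). nra. intros; apply HWc; lra. }
  assert (HWparts : forall t, t0 <= t ->
     0 <= rsum r (fun k => rsum n (fun i => / 2 * ((xt i k t - 0) * (xt i k t - 0)))) /\
     0 <= rsum r (fun k => rsum l (fun e => / 2 * ((kappa e k t - Kst) * (kappa e k t - Kst)))) /\
     0 <= rsum n (fun i => / delta i * eta i t)).
  { intros t Ht. split; [|split].
    - apply rsum_nonneg; intros; apply rsum_nonneg; intros; apply halfsq_nonneg.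
    - apply rsum_nonneg; intros; apply rsum_nonneg; intros; apply halfsq_nonneg.
    - apply rsum_nonneg; intros i Hi. pose proof (Hdelta i Hi). pose proof (Hetanonneg i t Hi Ht).
      apply Rmult_le_pos; auto. left; apply Rinv_0_lt_compat; lra. }
  assert (HWnn : forall t, t0 <= t -> 0 <= W t).
  { intros t Ht. destruct (HWparts t Ht) as (?&?&?). unfold W. lra. }
  assert (HWxt : forall t, t0 <= t -> / 2 * ((xt i0 k0 t - 0) * (xt i0 k0 t - 0)) <= W t).
  { intros t Ht. destruct (HWparts t Ht) as (?&?&?). unfold W.
    assert (/ 2 * ((xt i0 k0 t - 0) * (xt i0 k0 t - 0)) <= rsum r (fun k => rsum n (fun i => / 2 * ((xt i k t - 0) * (xt i k t - 0))))).
    { eapply Rle_trans; [|apply (rsum_term_le r (fun k => rsum n (fun i => / 2 * ((xt i k t - 0) * (xt i k t - 0)))) k0)]; auto.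
      apply (rsum_term_le n (fun i => / 2 * ((xt i k0 t - 0) * (xt i k0 t - 0))) i0); auto. intros; apply halfsq_nonneg.
      intros; apply rsum_nonneg; intros; apply halfsq_nonneg. }
    lra. }
  assert (HWk : forall e t, (e < l)%nat -> t0 <= t -> / 2 * ((kappa e k0 t - Kst) * (kappa e k0 t - Kst)) <= W t).
  { intros e t He Ht. destruct (HWparts t Ht) as (?&?&?). unfold W.
    assert (/ 2 * ((kappa e k0 t - Kst) * (kappa e k0 t - Kst)) <= rsum r (fun k => rsum l (fun e => / 2 * ((kappa e k t - Kst) * (kappa e k t - Kst))))).
    { eapply Rle_trans; [|apply (rsum_term_le r (fun k => rsum l (fun e => / 2 * ((kappa e k t - Kst) * (kappa e k t - Kst)))) k0)]; auto.
      apply (rsum_term_le l (fun e => / 2 * ((kappa e k0 t - Kst) * (kappa e k0 t - Kst))) e); auto. intros; apply halfsq_nonneg.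
      intros; apply rsum_nonneg; intros; apply halfsq_nonneg. }
    lra. }
  set (W0 := W t0).
  destruct (unif_bound n l src dst (fun j t => phi j k0 t) varphi Hconn
     (fun e t He Ht => proj1 (HA2 t Ht e k0 He Hkk)) i0 Hii) as [Cp [HCp HCp']].
  destruct (unif_bound n l src dst (fun j t => dphi j k0 t) dvarphi Hconn
     (fun e t He Ht => proj2 (HA2 t Ht e k0 He Hkk)) i0 Hii) as [Cd [HCd HCd']].
  pose proof (mean_bound n (fun j t => phi j k0 t) i0 Cp Hn0 HCp') as Hmp.
  pose proof (mean_bound n (fun j t => dphi j k0 t) i0 Cd Hn0 HCd') as Hmd.
  pose (L := gamma * (1 + 2 * W0 + Cp) + INR l * (Rabs Kst + 1 + 2 * W0) + Cd).
  assert (HL : forall t, t0 <= t -> Rabs (Dxt i0 k0 t) <= L).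
  { intros t Ht.
    assert (Hx1 : Rabs (xt i0 k0 t) <= 1 + 2 * W0) by (apply halfsq_bound; eapply Rle_trans; [apply HWxt; lra|apply HWdec; lra]).
    assert (Hw1 : Rabs (w i0 k0 t) <= INR l * (Rabs Kst + 1 + 2 * W0)).
    { unfold w, w_sig. eapply Rle_trans. apply rsum_abs. rewrite <- rsum_const.
      apply rsum_le. intros e He.
      assert (Rabs (kappa e k0 t - Kst) <= 1 + 2 * W0) by (apply halfsq_bound; rewrite Rminus_0_r; eapply Rle_trans; [apply HWk; auto; lra|apply HWdec; lra]).
      rewrite !Rabs_mult. pose proof (Binc_abs src dst i0 e). pose proof (sgn_abs (xi_hat src dst xhat e k0 t)).
      pose proof (Rabs_triang_inv (kappa e k0 t) Kst).
      pose proof (Rabs_pos (Binc src dst i0 e)). pose proof (Rabs_pos (kappa e k0 t)). pose proof (Rabs_pos (sgn (xi_hat src dst xhat e k0 t))).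
      assert (Rabs (kappa e k0 t) <= Rabs Kst + 1 + 2 * W0) by lra.
      apply Rle_trans with (1 * Rabs (kappa e k0 t) * 1); [|lra].
      apply Rmult_le_compat; try nra. }
    pose proof (Hmp t ltac:(lra)) as Hm1. pose proof (Hmd t ltac:(lra)) as Hm2. cbv beta in Hm1, Hm2.
    unfold Dxt.
    replace (- gamma * z i0 k0 t - w i0 k0 t + dphi i0 k0 t - / INR n * rsum n (fun j => dphi j k0 t))
      with (- gamma * xt i0 k0 t - gamma * (/ INR n * rsum n (fun j => phi j k0 t) - phi i0 k0 t) - w i0 k0 t
            - (/ INR n * rsum n (fun j => dphi j k0 t) - dphi i0 k0 t)) by (unfold xt; ring).
    unfold L.
    eapply Rle_trans. apply abs4; lra.
    pose proof (Rmult_le_compat_l gamma _ _ (Rlt_le _ _ Hgamma) Hx1).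
    pose proof (Rmult_le_compat_l gamma _ _ (Rlt_le _ _ Hgamma) Hm1). lra. }
  assert (HLnn : 0 <= L) by (pose proof (HL t0 ltac:(lra)); pose proof (Rabs_pos (Dxt i0 k0 t0)); lra).
  assert (Hdecr : forall a b c, t0 <= a -> a <= b -> 0 <= c ->
     (forall u, a <= u <= b -> c <= xt i0 k0 u * xt i0 k0 u) -> W b + gamma * c * b <= W a + gamma * c * a).
  { intros a b c Ha Hab Hc Hu. apply (mono (fun u => W u + gamma * c * u) (fun u => DW u + gamma * c) a b Hab).
    - intros t Ht. apply rderiv_plus. apply HW; lra. apply rderiv_lin.
    - intros t Ht. pose proof (HDW t ltac:(lra)). pose proof (Hu t ltac:(lra)). nra.
    - intros t Ht. apply cont_plus. apply HWc; lra. apply cont_lin. }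
  assert (Hlip : forall a b, t0 <= a -> a <= b -> Rabs (xt i0 k0 b - xt i0 k0 a) <= L * (b - a)).
  { intros a b Ha Hab. apply (lipschitz (xt i0 k0) (Dxt i0 k0) a b L Hab).
    intros; apply HDxt; auto; lra. intros; apply HL; lra. intros; apply Hxtc; auto; lra. }
  apply NNPP. intro Hno.
  assert (Hinf : forall T, exists t, T <= t /\ eps <= Rabs (xt i0 k0 t)).
  { intros T. apply NNPP. intro H. apply Hno. exists T. intros t Ht. apply Rnot_le_lt. intro. apply H. exists t. split; auto. }
  set (h := eps / (2 * (L + 1))).
  assert (Hh : 0 < h) by (unfold h; apply Rdiv_lt_0_compat; lra).
  assert (HLh : L * h < eps / 2).
  { unfold h. replace (L * (eps / (2 * (L + 1)))) with (eps / 2 * (L / (L + 1))) by (field; lra).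
    assert (L / (L + 1) < 1) by (apply (Rmult_lt_reg_r (L + 1)); [lra|]; unfold Rdiv; rewrite Rmult_assoc, Rinv_l; lra).
    nra. }
  set (c := eps * eps / 4).
  assert (Hc : 0 < c) by (unfold c; nra).
  assert (Hstep : forall t, t0 <= t -> eps <= Rabs (xt i0 k0 t) -> W (t + h) + gamma * c * h <= W t).
  { intros t Ht He.
    pose proof (Hdecr t (t + h) c Ht ltac:(lra) ltac:(lra)).
    assert (W (t + h) + gamma * c * (t + h) <= W t + gamma * c * t); [|nra].
    apply H. intros u Hu. pose proof (Hlip t u Ht ltac:(lra)).
    pose proof (Rabs_triang_inv (xt i0 k0 t) (xt i0 k0 u)). rewrite Rabs_minus_sym in H1.
    assert (eps / 2 <= Rabs (xt i0 k0 u)) by nra.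
    assert (Rabs (xt i0 k0 u) * Rabs (xt i0 k0 u) = xt i0 k0 u * xt i0 k0 u) by (rewrite <- Rabs_mult; apply Rabs_pos_eq; nra).
    unfold c. nra. }
  assert (Hind : forall N, exists t, t0 <= t /\ W t <= W0 - INR N * (gamma * c * h)).
  { induction N as [|N [t [Ht HWt]]].
    - exists t0. simpl. unfold W0. lra.
    - destruct (Hinf t) as [t' [Htt' He]]. exists (t' + h). split; [lra|].
      pose proof (Hstep t' ltac:(lra) He). pose proof (HWdec t t' Ht Htt'). rewrite S_INR. nra. }
  assert (Hgch : 0 < gamma * c * h) by (apply Rmult_lt_0_compat; [apply Rmult_lt_0_compat|]; lra).
  destruct (INR_unbounded (W0 / (gamma * c * h))) as [N HN].
  destruct (Hind N) as [t [Ht HWt]].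
  pose proof (HWnn t Ht).
  assert (INR N * (gamma * c * h) > W0).
  { apply (Rmult_gt_compat_r (gamma * c * h)) in HN; auto. replace (W0 / (gamma * c * h) * (gamma * c * h)) with W0 in HN by (field; lra). lra. }
  lra.
Qed.
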